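(* Let $K$ be a $d$-dimensional convex body with $o\in\mathrm{int}(K)$ and let $0\le\varepsilon<1$. Let $\{v_i+\lambda_iK: i\in I\}$ be a family of positive homothets of $K$ such that $v_i\notin v_j+\lambda_j\,\mathrm{int}(K)$ for all distinct $i,j\in I$, and for all $i\in I$: $\lambda_i\ge1$, $(v_i+\lambda_iK)\cap(-\varepsilon K)\neq\emptyset$ and $o\notin v_i+\lambda_i\,\mathrm{int}(K)$. Then $|I|\le P\!\left(K,\frac{2}{1-\varepsilon}\right)$.
   Context: A convex body is a compact convex set with non-empty interior. For a convex body $L$ with $o\in\mathrm{int}(L)$, $\|x\|_L=\inf\{\mu>0:x\in\mu L\}$. $P(K,\lambda)$ is the maximum number of points $p_1,\dots,p_m$ such that $\max_{i<j}\|p_i-p_j\|_{\frac12(K-K)}\big/\min_{i<j}\|p_i-p_j\|_{K\cap-K}\le\lambda$. *)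

(* Defs.v *)
From HB Require Import structures.
From mathcomp Require Import all_boot all_order all_algebra.
From mathcomp Require Import all_classical all_reals all_analysis.
Set Implicit Arguments. Unset Strict Implicit. Unset Printing Implicit Defensive.
Import Order.TTheory GRing.Theory Num.Theory.
Import numFieldNormedType.Exports.
Local Open Scope classical_set_scope.
Local Open Scope ring_scope.

Section Defs.
Variables (R : realType) (d : nat).
Notation V := 'rV[R]_d.

Definition convexset (K : set V) : Prop :=
  forall x y (t : R), K x -> K y -> 0 <= t <= 1 -> K (t *: x + (1 - t) *: y).

Definition convex_body (K : set V) : Prop :=
  compact K /\ convexset K /\ (interior K !=set0).

Definition gauge (L : set V) (x : V) : R :=
  inf [set mu : R | 0 < mu /\ exists2 y, L y & x = mu *: y].

Definition half_diff (K : set V) : set V :=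
  [set z | exists a b, [/\ K a, K b & z = 2^-1 *: (a - b)]].

Definition sym_inter (K : set V) : set V := K `&` [set x | K (- x)].

(* There are m points p_1..p_m (pairwise distinct, so the minimum in the
   denominator is positive) with
   max_{i<j} ||p_i-p_j||_{(K-K)/2} / min_{i<j} ||p_i-p_j||_{K cap -K} <= lambda. *)
Definition P_attains (K : set V) (lambda : R) (m : nat) : Prop :=
  exists p : 'I_m -> V, injective p /\
    forall i j k l : 'I_m, (i < j)%N -> (k < l)%N ->
      gauge (half_diff K) (p i - p j) <= lambda * gauge (sym_inter K) (p k - p l).

Definition homothet (v : V) (lam : R) (A : set V) : set V :=
  [set x | exists2 y, A y & x = v + lam *: y].

End Defs.

(* Main.v *)
Require Import Defs.
From HB Require Import structures.
From mathcomp Require Import all_boot all_order all_algebra.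
From mathcomp Require Import all_classical all_reals all_analysis.
From mathcomp Require Import ring lra.
Import Order.TTheory GRing.Theory Num.Theory.
Import numFieldNormedType.Exports.
Local Open Scope classical_set_scope.
Local Open Scope ring_scope.
Section Helpers.
Variables (R : realType) (d : nat) (K : set 'rV[R]_d).

Lemma int0_ball : interior K 0 -> exists2 r : R, 0 < r & forall y, `|y| < r -> K y.
Proof.
move=> /nbhs_ballP [e e0 He]; exists e => // y Hy; apply: He.
by rewrite -ball_normE /= sub0r normrN.
Qed.

Lemma scaled_int (r : R) (c : 'rV[R]_d) (g : R) : 0 < r -> (forall y, `|y| < r -> K y) ->
  convexset K -> K c -> 0 <= g < 1 -> interior K (g *: c).
Proof.
move=> r0 Hb cvx Kc /andP[g0 g1].
apply/nbhs_ballP; exists ((1 - g) * r); first by apply: mulr_gt0 => //; rewrite subr_gt0.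
move=> y; rewrite -ball_normE /= => Hy.
have g1' : 0 < 1 - g by rewrite subr_gt0.
set w := (1 - g)^-1 *: (y - g *: c).
have Kw : K w.
  apply: Hb; rewrite /w mx_normZ ger0_norm ?invr_ge0 ?ltW //.
  rewrite -opprB normrN in Hy.
  by rewrite ltr_pdivrMl // mulrC.
have -> : y = g *: c + (1 - g) *: w.
  by rewrite /w scalerA mulfV ?gt_eqF // scale1r addrC subrK.
by apply: cvx => //; rewrite g0 ltW.
Qed.

Lemma comb_int (r : R) (a b : 'rV[R]_d) (al be : R) : 0 < r -> (forall y, `|y| < r -> K y) ->
  convexset K -> K a -> K b -> 0 <= al -> 0 <= be -> al + be < 1 ->
  interior K (al *: a + be *: b).
Proof.
move=> r0 Hb cvx Ka Kb al0 be0 s1.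
have [g0|gn0] := eqVneq (al + be) 0.
  have al00 : al = 0 by apply/eqP; rewrite eq_le al0 andbT -g0 lerDl.
  have be00 : be = 0 by move: g0; rewrite al00 add0r.
  rewrite al00 be00 !scale0r addr0.
  have := (@scaled_int r a 0 r0 Hb cvx Ka); rewrite scale0r; apply; by rewrite lexx ltr01.
have gp : 0 < al + be by rewrite lt_def gn0 addr_ge0.
set g := al + be.
have -> : al *: a + be *: b = g *: ((al / g) *: a + (1 - al / g) *: b).
  rewrite scalerDr !scalerA mulrCA mulfV ?gt_eqF // mulr1; congr (_ + _).
  by rewrite mulrBr mulr1 mulrCA mulfV ?gt_eqF // mulr1 /g addrC addKr.
apply: (@scaled_int r _ g r0 Hb cvx); last by rewrite ltW // andbT addr_ge0.
apply: cvx => //; rewrite /g; apply/andP; split; first by rewrite divr_ge0 // ltW. 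
by rewrite ler_pdivrMr // mul1r lerDl.
Qed.
End Helpers.
Lemma core (R : realType) (d : nat) (K : set 'rV[R]_d) (eps r : R) (I : finType)
  (v : I -> 'rV[R]_d) (lam : I -> R) :
  0 < r -> (forall y, `|y| < r -> K y) -> convexset K -> 0 <= eps ->
  (forall i j : I, i != j -> ~ homothet (v j) (lam j) (interior K) (v i)) ->
  (forall i : I, 1 <= lam i) ->
  (forall i, K (- ((lam i + eps)^-1 *: v i))) ->
  forall a b, a != b -> lam b <= lam a -> forall mu z, 0 < mu -> K z ->
  (lam b + eps)^-1 *: v b - (lam a + eps)^-1 *: v a = mu *: z -> (1 + eps)^-1 <= mu.
Proof.
move=> r0 Hb cvx eps0 Hsep Hlam Hp a b ab lba mu z mu0 Kz E.
rewrite leNgt; apply/negP => mulow.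
have la1 := Hlam a; have lb1 := Hlam b.
have la0 : 0 < lam a by lra.
have lb0 : 0 < lam b by lra.
apply: (Hsep b a); first by rewrite eq_sym.
set al := (lam a - lam b) / lam a.
set be := (lam b + eps) * mu / lam a.
exists (al *: (- ((lam a + eps)^-1 *: v a)) + be *: z).
  apply: (@comb_int R d K r _ _ al be r0 Hb cvx (Hp a) Kz).
  - by rewrite /al divr_ge0 // ?subr_ge0 // ltW.
  - by rewrite /be !mulr_ge0 // ?invr_ge0 ltW // ltr_wpDr.
  have h1 : (lam b + eps) * mu < (lam b + eps) * (1 + eps)^-1.
    by rewrite ltr_pM2l //; lra.
  have h2 : (lam b + eps) * (1 + eps)^-1 <= lam b.
    rewrite -[_ * _^-1]/((lam b + eps) / (1 + eps)) ler_pdivrMr; last lra.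
    nra.
  have -> : al + be = (lam a - lam b + (lam b + eps) * mu) / lam a.
    by rewrite /al /be -mulrDl.
  rewrite ltr_pdivrMr // mul1r; lra.
have Ez : z = mu^-1 *: ((lam b + eps)^-1 *: v b - (lam a + eps)^-1 *: v a).
  by rewrite E scalerA mulVf ?gt_eqF // scale1r.
rewrite Ez /al /be; apply/rowP => k; rewrite !mxE.
field.
by rewrite /= ?gt_eqF //; lra.
Qed.
Theorem lemma20 (R : realType) (d : nat) (K : set 'rV[R]_d) (eps : R)
  (I : finType) (v : I -> 'rV[R]_d) (lam : I -> R) :
  convex_body K -> interior K 0 ->
  0 <= eps -> eps < 1 ->
  (forall i j : I, i != j -> ~ homothet (v j) (lam j) (interior K) (v i)) ->
  (forall i : I, 1 <= lam i) ->
  (forall i : I, homothet (v i) (lam i) K `&` homothet 0 (- eps) K !=set0) ->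
  (forall i : I, ~ homothet (v i) (lam i) (interior K) 0) ->
  exists m : nat, (#|I| <= m)%N /\ P_attains K (2 / (1 - eps)) m.
Proof.
move=> [_ [cvx _]] int0 eps0 eps1 Hsep Hlam Hmeet Hno0.
have [r r0 Hb] := @int0_ball R d K int0.
have K0 : K 0 by apply: Hb; rewrite normr0.
have Lpos : forall i, 0 < lam i + eps by move=> i; have := Hlam i; lra.
pose p i := (lam i + eps)^-1 *: v i.
have Hp : forall i, K (- p i).
  move=> i; have [x [[y Ky ->] [y2 Ky2 E]]] := Hmeet i.
  have li := Hlam i.
  have Ev : v i = (0 + (-eps) *: y2) - lam i *: y by rewrite -E addrK.
  have -> : - p i = (lam i / (lam i + eps)) *: y + (1 - lam i / (lam i + eps)) *: y2.
    rewrite /p Ev; apply/rowP => k; rewrite !mxE; field.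
    by rewrite gt_eqF //; lra.
  apply: cvx => //; apply/andP; split.
    by rewrite divr_ge0 //; lra.
  by rewrite ler_pdivrMr; lra.
have core' := @core R d K eps r I v lam r0 Hb cvx eps0 Hsep Hlam Hp.
have lower : forall a b, a != b -> forall mu y, 0 < mu -> K y -> K (-y) ->
    p a - p b = mu *: y -> (1+eps)^-1 <= mu.
  move=> a b ab mu y mu0 Ky Kny E; case: (leP (lam b) (lam a)) => h.
    by apply: (core' a b ab h mu (-y)) => //; rewrite scalerN -E opprB.
  by apply: (core' b a _ (ltW h) mu y) => //; rewrite eq_sym.
have ie0 : 0 < (1 + eps)^-1 by rewrite invr_gt0; lra.
exists #|I|; split => //.
exists (fun k => p (enum_val k)); split.
  move=> k l Ekl; apply: enum_val_inj.
  case: (eqVneq (enum_val k) (enum_val l)) => // ne; exfalso.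
  have := lower _ _ ne ((1+eps)^-1 / 2) 0 _ K0 _ _.
  rewrite Ekl subrr scaler0 oppr0 => /(_ _ K0 erefl).
  have : 0 < (1 + eps)^-1 / 2 by rewrite divr_gt0.
  move=> h /(_ h); lra.
move=> i j k l ij kl.
have ne : enum_val k != enum_val l.
  by rewrite (inj_eq enum_val_inj) -val_eqE /= neq_ltn kl.
have up : gauge (half_diff K) (p (enum_val i) - p (enum_val j)) <= 2.
  rewrite /gauge; apply: ge_inf.
    by exists 0 => mu [mu0 _]; rewrite ltW.
  split; first lra.
  exists (2^-1 *: (- p (enum_val j) - - p (enum_val i))).
    by exists (- p (enum_val j)), (- p (enum_val i)).
  by apply/rowP => t; rewrite !mxE; field; rewrite !gt_eqF ?Lpos.
set x := p (enum_val k) - p (enum_val l).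
have lo : (1+eps)^-1 <= gauge (sym_inter K) x.
  apply: lb_le_inf.
    pose mu := 2 * (`|x| + 1) / r.
    have mu0 : 0 < mu by rewrite divr_gt0 // mulr_gt0 // ltr_pwDr.
    have ny : `|mu^-1 *: x| < r.
      rewrite mx_normZ ger0_norm ?invr_ge0 ?ltW // /mu invfM invrK.
      rewrite mulrAC -[ltRHS]mul1r ltr_pM2r // mulrC ltr_pdivrMr; last by rewrite mulr_gt0 // ltr_pwDr.
      have := normr_ge0 x; lra.
    exists mu; split => //; exists (mu^-1 *: x).
      split; first exact: Hb.
      by apply: Hb; rewrite /= normrN.
    by rewrite scalerA mulfV ?gt_eqF // scale1r.
  by move=> mu [mu0 [y [Ky Kny] Ex]]; apply: (lower _ _ ne mu y).
have e1 : 0 < 1 - eps by lra.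
have key : 2 <= 2 / (1 - eps) * (1 + eps)^-1.
  rewrite -mulrA -invfM ler_pdivlMr; last by apply: mulr_gt0; lra.
  nra.
apply: (le_trans up); apply: (le_trans key).
by rewrite ler_wpM2l // divr_ge0 // ltW.
Qed.
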